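(* Assume (i) $\eta^t=1/\sqrt t$ for all $t$; (ii) $\rho^t>0$ is nondecreasing and $\rho^t\le\rho^{\max}$ for all $t$; (iii) $f_p(\cdot)=f_p(\cdot;\mathcal{D}_p)$ is $L$-Lipschitz on $\mathcal{W}$ with respect to the Euclidean norm. Fix $t$ and $p$, let $w^{t+1},\lambda^t_p,z^t_p\in\mathbb{R}^{J\times K}$ and a noise realization $\tilde\xi^t_p\in\mathbb{R}^{J\times K}$ be given, let $$z^{t+1}_p=\operatorname{argmin}_{z\in\mathcal{W}}\langle f'_p(z^t_p),z\rangle+\tfrac{\rho^t}{2}\big\|w^{t+1}-z+\tfrac1{\rho^t}(\lambda^t_p-\tilde\xi^t_p)\big\|^2+\tfrac1{2\eta^t}\|z-z^t_p\|^2,$$ and $\lambda^{t+1}_p=\lambda^t_p+\rho^t(w^{t+1}-z^{t+1}_p)$. Then for all $z_p\in\mathcal{W}$, $$f_p(z^t_p)-f_p(z_p)-\langle\lambda^{t+1}_p,z^{t+1}_p-z_p\rangle\le\frac{\eta^t\|f'_p(z^t_p)+\tilde\xi^t_p\|^2}{2}+\frac1{2\eta^t}\big(\|z_p-z^t_p\|^2-\|z_p-z^{t+1}_p\|^2\big)+\langle\tilde\xi^t_p,z_p-z^t_p\rangle.$$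
   Context: $\mathbb{R}^{J\times K}$ carries the Frobenius inner product and norm. $\mathcal{W}\subset\mathbb{R}^{J\times K}$ is compact convex. $f_p(z)=\frac1I\sum_{i=1}^{I_p}\varphi(z;x_{pi},y_{pi})+\frac\beta Pr(z)$ is the local empirical risk of agent $p$ with convex loss $\varphi$ and convex regularizer $r$ on $\mathbb{R}^{J\times K}$, $\beta>0$; $f'_p(z)$ denotes a fixed subgradient of $f_p$ at $z$. *)

(* Defs.v *)
From HB Require Import structures.
From mathcomp Require Import all_boot all_order all_algebra.
From mathcomp Require Import all_classical all_reals topology num_topology matrix_topology.
Import numFieldTopology.Exports.
Set Implicit Arguments. Unset Strict Implicit. Unset Printing Implicit Defensive.
Import Order.TTheory GRing.Theory Num.Theory.
Local Open Scope ring_scope.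
Local Open Scope classical_set_scope.

Definition frob (R : realType) (J K : nat) (A B : 'M[R]_(J, K)) : R :=
  \sum_(i < J) \sum_(j < K) A i j * B i j.

Definition frob_norm (R : realType) (J K : nat) (A : 'M[R]_(J, K)) : R :=
  Num.sqrt (frob A A).

Definition convex_mxset (R : realType) (J K : nat) (W : set 'M[R]_(J, K)) : Prop :=
  forall a b (l : R), W a -> W b -> 0 <= l -> l <= 1 ->
    W (l *: a + (1 - l) *: b).

Definition convex_mxfun (R : realType) (J K : nat) (g : 'M[R]_(J, K) -> R) : Prop :=
  forall a b (l : R), 0 <= l -> l <= 1 ->
    g (l *: a + (1 - l) *: b) <= l * g a + (1 - l) * g b.

Definition local_risk (R : realType) (J K : nat) (X Y : Type)
  (phi : 'M[R]_(J, K) -> X -> Y -> R) (r : 'M[R]_(J, K) -> R)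
  (I P Ip : nat) (beta : R) (x : 'I_Ip -> X) (y : 'I_Ip -> Y)
  (z : 'M[R]_(J, K)) : R :=
  (I%:R)^-1 * (\sum_(i < Ip) phi z (x i) (y i)) + beta / P%:R * r z.

(* Main.v *)
Require Import Defs.
From HB Require Import structures.
From mathcomp Require Import all_boot all_order all_algebra.
From mathcomp Require Import all_classical all_reals topology num_topology matrix_topology.
Import numFieldTopology.Exports.
Import Order.TTheory GRing.Theory Num.Theory.
Local Open Scope ring_scope.
Local Open Scope classical_set_scope.
From mathcomp Require Import ring lra.

Section Frob.
Context {R : realType} {J K : nat}.
Implicit Types (A B C : 'M[R]_(J, K)).

Lemma frobC A B : frob A B = frob B A.
Proof. by apply: eq_bigr => i _; apply: eq_bigr => j _; rewrite mulrC. Qed.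

Lemma frobDl A B C : frob (A + B) C = frob A C + frob B C.
Proof.
rewrite /frob -big_split; apply: eq_bigr => i _; rewrite -big_split.
by apply: eq_bigr => j _; rewrite mxE mulrDl.
Qed.

Lemma frobZl (a : R) A B : frob (a *: A) B = a * frob A B.
Proof.
rewrite /frob mulr_sumr; apply: eq_bigr => i _; rewrite mulr_sumr.
by apply: eq_bigr => j _; rewrite mxE mulrA.
Qed.

Lemma frobNl A B : frob (- A) B = - frob A B.
Proof. by rewrite -scaleN1r frobZl mulN1r. Qed.

Lemma frobBl A B C : frob (A - B) C = frob A C - frob B C.
Proof. by rewrite frobDl frobNl. Qed.

Lemma frobDr A B C : frob C (A + B) = frob C A + frob C B.
Proof. by rewrite frobC frobDl !(frobC C). Qed.

Lemma frobZr (a : R) A B : frob B (a *: A) = a * frob B A.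
Proof. by rewrite frobC frobZl frobC. Qed.

Lemma frobBr A B C : frob C (A - B) = frob C A - frob C B.
Proof. by rewrite frobC frobBl !(frobC C). Qed.

Lemma frob_ge0 A : 0 <= frob A A.
Proof.
apply: sumr_ge0 => i _; apply: sumr_ge0 => j _; by rewrite -expr2 sqr_ge0.
Qed.

Lemma frob_normE A : frob_norm A ^+ 2 = frob A A.
Proof. by rewrite /frob_norm sqr_sqrtr // frob_ge0. Qed.

Lemma norm_comb A B (s : R) :
  frob_norm (A + s *: B) ^+ 2 = frob A A + 2 * s * frob A B + s ^+ 2 * frob B B.
Proof.
rewrite frob_normE !frobDl !frobDr !frobZl !frobZr (frobC B A); ring.
Qed.
Lemma frob_comb2 (a : R) A B :
  frob (a *: A + B) (a *: A + B) = a ^+ 2 * frob A A + 2 * a * frob A B + frob B B.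
Proof. rewrite !frobDl !frobDr !frobZl !frobZr (frobC B A); ring. Qed.
End Frob.

Lemma lin_quad_ge0 (R : realFieldType) (A B : R) : 0 <= B ->
  (forall s, 0 < s -> s <= 1 -> 0 <= s * A + s ^+ 2 * B) -> 0 <= A.
Proof.
move=> B0 H; rewrite leNgt; apply/negP => A0.
set D := 2 * B - A.
have D0 : 0 < D by rewrite /D; lra.
set s := - A / D.
have s0 : 0 < s by rewrite /s divr_gt0 // oppr_gt0.
have s1 : s <= 1.
  rewrite /s ler_pdivrMr // mul1r /D. lra.
have sD : s * D = - A by rewrite /s mulrVK // unitfE gt_eqF.
have hD : D = 2 * B - A by [].
have := H s s0 s1.
clearbody s D.
have : s * A + s ^+ 2 * B < 0 by nra.
lra.
Qed.

Theorem proposition3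
  (R : realType) (J K : nat) (W : set 'M[R]_(J, K))
  (W_convex : convex_mxset W) (W_compact : compact W)
  (X Y : Type) (phi : 'M[R]_(J, K) -> X -> Y -> R) (r : 'M[R]_(J, K) -> R)
  (I P Ip : nat) (beta : R) (x : 'I_Ip -> X) (y : 'I_Ip -> Y)
  (phi_convex : forall a b, convex_mxfun (fun z => phi z a b))
  (r_convex : convex_mxfun r) (beta_pos : 0 < beta)
  (fp' : 'M[R]_(J, K) -> 'M[R]_(J, K))
  (fp'_subgrad : forall z u,
     local_risk phi r I P beta x y z + frob (fp' z) (u - z)
       <= local_risk phi r I P beta x y u)
  (eta rho : nat -> R) (rhomax L : R)
  (eta_def : forall s : nat, (0 < s)%N -> eta s = (Num.sqrt (s%:R : R))^-1)
  (rho_pos : forall s, 0 < rho s)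
  (rho_nondecr : forall s1 s2 : nat, (s1 <= s2)%N -> rho s1 <= rho s2)
  (rho_le_max : forall s, rho s <= rhomax)
  (f_lipschitz : forall a b, W a -> W b ->
     `|local_risk phi r I P beta x y a - local_risk phi r I P beta x y b|
        <= L * frob_norm (a - b))
  (t : nat) (t_pos : (0 < t)%N)
  (w1 lam zt xi z1 lam1 : 'M[R]_(J, K))
  (z1_argmin : W z1 /\ forall z, W z ->
     let obj := fun v : 'M[R]_(J, K) =>
       frob (fp' zt) v
       + rho t / 2 * frob_norm (w1 - v + (rho t)^-1 *: (lam - xi)) ^+ 2
       + (2 * eta t)^-1 * frob_norm (v - zt) ^+ 2 in
     obj z1 <= obj z)
  (lam1_def : lam1 = lam + rho t *: (w1 - z1)) :
  forall zp, W zp ->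
    local_risk phi r I P beta x y zt - local_risk phi r I P beta x y zp
      - frob lam1 (z1 - zp)
    <= eta t * frob_norm (fp' zt + xi) ^+ 2 / 2
       + (2 * eta t)^-1 * (frob_norm (zp - zt) ^+ 2 - frob_norm (zp - z1) ^+ 2)
       + frob xi (zp - zt).
Proof.
move=> zp Wzp; case: z1_argmin => Wz1 hmin.
set f := local_risk phi r I P beta x y.
set g := fp' zt.
set et := eta t.
set rh := rho t.
have et0 : 0 < et by rewrite /et eta_def // invr_gt0 sqrtr_gt0 ltr0n.
have rh0 : 0 < rh by apply: rho_pos.
set d := zp - z1.
set e := z1 - zt.
set c := rh^-1 *: (lam - xi).
set u := w1 - z1 + c.
have hu : frob lam1 d - frob xi d = rh * frob u d.
  rewrite -frobBl -frobZl; congr frob.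
  rewrite lam1_def /u /c; apply/matrixP => i j; rewrite !mxE.
  by rewrite -/rh; field; rewrite gt_eqF.
(* first-order condition *)
have hA : 0 <= frob g d - rh * frob u d + 2 * (2 * et)^-1 * frob e d.
  apply: (@lin_quad_ge0 _ _ ((rh / 2 + (2 * et)^-1) * frob d d)).
    by apply: mulr_ge0; [apply: addr_ge0; [apply: divr_ge0; lra|
      rewrite invr_ge0; lra] | apply: frob_ge0].
  move=> s s0 s1.
  have Wzs : W (z1 + s *: d).
    have -> : z1 + s *: d = s *: zp + (1 - s) *: z1.
      by apply/matrixP => i j; rewrite /d !mxE; ring.
    by apply: W_convex => //; apply: ltW.
  have := hmin _ Wzs; rewrite /=.
  have -> : w1 - (z1 + s *: d) + c = u + (- s) *: d.
    by apply/matrixP => i j; rewrite /u !mxE; ring.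
  have -> : z1 + s *: d - zt = e + s *: d.
    by apply/matrixP => i j; rewrite /e !mxE; ring.
  have -> : w1 - z1 + c = u + 0 *: d by rewrite scale0r addr0.
  have -> : z1 - zt = e + 0 *: d by rewrite scale0r addr0.
  rewrite !norm_comb frobDr frobZr.
  set ie := (2 * et)^-1.
  have ie0 : 0 < ie by rewrite /ie invr_gt0; lra.
  clearbody ie.
  rewrite -/rh -/g => H; lra.
have h1 := fp'_subgrad zt zp.
have hde : zp - zt = d + e by rewrite /d /e addrA subrK.
rewrite hde frobDr -/f -/g in h1.
set ie := (2 * et)^-1 in hA *.
have hie : ie * et = 1 / 2 by rewrite /ie; field; rewrite gt_eqF.
have ie0 : 0 <= ie by rewrite /ie invr_ge0; lra.
have hyoung := frob_ge0 (et *: (g + xi) + e).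
rewrite frob_comb2 in hyoung.
set G2 := frob (g + xi) (g + xi) in hyoung *.
set GE := frob (g + xi) e in hyoung.
have hGE : GE = frob g e + frob xi e by rewrite /GE frobDl.
have hy : 0 <= et * G2 / 2 + GE + ie * frob e e.
  have := mulr_ge0 ie0 hyoung.
  have -> : ie * (et ^+ 2 * G2 + 2 * et * GE + frob e e)
     = (ie * et) * et * G2 + 2 * (ie * et) * GE + ie * frob e e by ring.
  rewrite hie; lra.
have hl : frob lam1 (z1 - zp) = - frob lam1 d by rewrite /d !frobBr; ring.
have hdd : frob (d + e) (d + e) = frob d d + 2 * frob e d + frob e e.
  by rewrite -(scale1r d) frob_comb2 !scale1r (frobC d e); ring.
rewrite hl !frob_normE -/G2 hde hdd (frobDr d e xi).
clearbody ie G2 GE.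
lra.
Qed.
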